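(* Let $G$ be a graph whose vertex set is partitioned among agents $1,\dots,m$ (agent $i$ owning $V_i$), and let $M_1$ and $M_2$ be two matchings of $G$. Then there exist two matchings $N_1$ and $N_2$ of $G$ such that for every agent $i$: (1) $|u_i(N_1)-u_i(N_2)|\le 2$, and (2) $u_i(N_1)+u_i(N_2)=u_i(M_1)+u_i(M_2)$.
   Context: For a matching $M$ of $G$ and an agent $i$, $u_i(M)$ denotes the number of vertices of $V_i$ covered by $M$. *)

(* Defs.v *)
From mathcomp Require Import all_boot.
Set Implicit Arguments. Unset Strict Implicit. Unset Printing Implicit Defensive.

Section Matchings.
Variable T : finType.

Definition is_edge (adj : rel T) (E : {set T}) : Prop :=
  exists x y, x != y /\ adj x y /\ E = [set x; y].

Definition is_matching (adj : rel T) (M : {set {set T}}) : Prop :=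
  (forall E, E \in M -> is_edge adj E) /\
  (forall E F, E \in M -> F \in M -> E != F -> [disjoint E & F]).

Definition covered (M : {set {set T}}) (x : T) : bool := [exists E in M, x \in E].

(* u_i(M): number of vertices owned by agent i (V_i = owner^-1(i)) covered by M *)
Definition util (m : nat) (owner : T -> 'I_m) (i : 'I_m) (M : {set {set T}}) : nat :=
  #|[set x | (owner x == i) && covered M x]|.
End Matchings.

(* Main.v *)
Require Import Defs.
From mathcomp Require Import all_boot.
Set Implicit Arguments. Unset Strict Implicit. Unset Printing Implicit Defensive.

Definition mtc (T : finType) (M : {set {set T}}) :=
  (forall E, E \in M -> exists x y, x != y /\ E = [set x; y]) /\
  (forall E F, E \in M -> F \in M -> E != F -> [disjoint E & F]).

Definition ms (T : finType) (N1 N2 M1 M2 : {set {set T}}) :=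
  forall E, (E \in N1) + (E \in N2) = (E \in M1) + (E \in M2).

Lemma uniq_edge (T : finType) (M : {set {set T}}) E F v :
  mtc M -> E \in M -> F \in M -> v \in E -> v \in F -> E = F.
Proof.
move=> [_ hd] hE hF vE vF; apply/eqP; apply/negPn/negP => ne.
by move: (hd _ _ hE hF ne) => /disjoint_setI0 /setP /(_ v); rewrite !inE vE vF.
Qed.

Lemma coveredP (T : finType) (M : {set {set T}}) v :
  reflect (exists2 E, E \in M & v \in E) (covered M v).
Proof.
apply: (iffP existsP) => [[E /andP[h1 h2]]|[E h1 h2]]; exists E => //.
by rewrite h1.
Qed.

Lemma cov_del (T : finType) (M : {set {set T}}) (e : {set T}) (v : T) :
  v \notin e -> covered (M :\ e) v = covered M v.
Proof.
move=> ve; apply/coveredP/coveredP => [[E]|[E EM vE]].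
  by rewrite !inE => /andP[_ h] vE; exists E.
exists E => //; rewrite !inE EM andbT; apply/eqP => eE; by rewrite -eE vE in ve.
Qed.

Lemma cov_add (T : finType) (M : {set {set T}}) (e : {set T}) (v : T) :
  covered (M :|: [set e]) v = covered M v || (v \in e).
Proof.
apply/coveredP/orP => [[E]|[/coveredP[E EM vE]|ve]].
  by rewrite !inE => /orP[h|/eqP->] vE; [left; apply/coveredP; exists E|right].
  by exists E => //; rewrite !inE EM.
by exists e => //; rewrite !inE eqxx orbT.
Qed.

Lemma cov_sum (T : finType) (M : {set {set T}}) v : mtc M ->
  (covered M v : nat) = \sum_(E : {set T}) ((E \in M) && (v \in E)).
Proof.
move=> hM; case: (coveredP M v) => [[E0 E0M vE0]|nc].
  rewrite (bigD1 E0) //= E0M vE0 big1 // => E ne.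
  apply/eqP; rewrite eqb0; apply/negP => /andP[EM vE]; move/negP: ne; apply.
  by apply/eqP; exact: (uniq_edge hM EM E0M vE vE0).
rewrite big1 // => E _; apply/eqP; rewrite eqb0; apply/negP => /andP[EM vE]; apply: nc; by exists E.
Qed.

Lemma ms_cov (T : finType) (N1 N2 M1 M2 : {set {set T}}) v :
  mtc N1 -> mtc N2 -> mtc M1 -> mtc M2 -> ms N1 N2 M1 M2 ->
  covered N1 v + covered N2 v = covered M1 v + covered M2 v.
Proof.
move=> h1 h2 h3 h4 hm; rewrite !cov_sum // -!big_split /=; apply: eq_bigr => E _.
by case: (v \in E); rewrite ?andbT ?andbF // hm.
Qed.

Lemma other_end (T : finType) (M : {set {set T}}) E x : mtc M -> E \in M -> x \in E ->
  exists x', x' != x /\ E = [set x; x'].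
Proof.
move=> [he _] EM xE; have [a [b [ab eE]]] := he E EM.
rewrite eE in xE *; move: xE; rewrite !inE => /orP[]/eqP->; first by exists b; rewrite eq_sym.
by exists a; split=> //; apply/setP=> u; rewrite !inE orbC.
Qed.


Definition c1 (T : finType) (M1 M2 : {set {set T}}) v := covered M1 v != covered M2 v.

Definition FlipP (T : finType) (M1 M2 : {set {set T}}) x := exists N1 N2 z,
 [/\ mtc N1 /\ mtc N2, ms N1 N2 M1 M2, z != x, c1 M1 M2 z &
   forall v, covered N1 v = (if (v == x) || (v == z) then covered M2 v else covered M1 v) /\
             covered N2 v = (if (v == x) || (v == z) then covered M1 v else covered M2 v)].

Lemma flip_sym (T : finType) (M1 M2 : {set {set T}}) x : FlipP M2 M1 x -> FlipP M1 M2 x.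
Proof.
move=> [N1 [N2 [z [[h1 h2] hm hz hc hv]]]]; exists N2, N1, z; split => //.
- by move=> E; rewrite addnC hm addnC.
- by rewrite /c1 eq_sym.
- by move=> v; have [a b] := hv v.
Qed.

Lemma mtc_del (T : finType) (M : {set {set T}}) (e : {set T}) : mtc M -> mtc (M :\ e).
Proof.
move=> [h1 h2]; split.
  by move=> E; rewrite !inE => /andP[_ /h1].
by move=> E F; rewrite !inE => /andP[_ hE] /andP[_ hF]; apply: h2.
Qed.

Lemma mtc_add2 (T : finType) (M : {set {set T}}) (a b : T) : mtc M -> a != b ->
  ~~ covered M a -> ~~ covered M b -> mtc (M :|: [set [set a; b]]).
Proof.
move=> [h1 h2] ab ca cb.
have dj : forall F, F \in M -> [disjoint [set a; b] & F].
  move=> F FM; rewrite disjoints_subset; apply/subsetP => u; rewrite !inE.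
  move=> /orP[]/eqP-> ; apply/negP => uF.
    by move/negP: ca; apply; apply/coveredP; exists F.
  by move/negP: cb; apply; apply/coveredP; exists F.
split.
  move=> E; rewrite !inE => /orP[/h1 //|/eqP->]; by exists a, b.
move=> E F; rewrite !inE => /orP[EM|/eqP->] /orP[FM|/eqP->] ne.
- by apply: h2.
- by rewrite disjoint_sym; apply: dj.
- by apply: dj.
- by rewrite eqxx in ne.
Qed.

Lemma cov_delE (T : finType) (M : {set {set T}}) (e : {set T}) v : mtc M -> e \in M ->
  covered (M :\ e) v = covered M v && (v \notin e).
Proof.
move=> hM eM; case ve: (v \in e); last by rewrite andbT cov_del ?ve.
rewrite andbF; apply/negbTE/negP => /coveredP[F]; rewrite !inE => /andP[ne FM] vF.
by move/negP: ne; apply; apply/eqP; apply: (uniq_edge hM FM eM vF).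
Qed.

Lemma flip_step (T : finType) (M1 M2 : {set {set T}}) (x : T)
  (IH : forall (M1' M2' : {set {set T}}) (y : T), #|M1'| + #|M2'| < #|M1| + #|M2| -> mtc M1' -> mtc M2' ->
        c1 M1' M2' y -> FlipP M1' M2' y) :
  mtc M1 -> mtc M2 -> covered M1 x -> ~~ covered M2 x -> FlipP M1 M2 x.
Proof.
move=> h1 h2 /coveredP[e eM xe] nx2.
have [x' [x'x eE]] := other_end h1 eM xe.
have eM2 : e \notin M2 by apply/negP => eM2; move/negP: nx2; apply; apply/coveredP; exists e.
have c1x' : covered M1 x' by apply/coveredP; exists e; rewrite // eE !inE eqxx orbT.
have c1x : covered M1 x by apply/coveredP; exists e.
case cx': (covered M2 x').
-
  have lt : #|M1 :\ e| + #|M2| < #|M1| + #|M2|.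
    by rewrite ltn_add2r (cardsD1 e M1) eM.
  have hc : c1 (M1 :\ e) M2 x'.
    by rewrite /c1 cov_delE // eE !inE eqxx orbT andbF cx'.
  have [N1 [N2 [z [[hN1 hN2] hm hz hcz hv]]]] := IH _ _ _ lt (mtc_del e h1) h2 hc.
  have zx : z != x.
    apply/eqP => zx; 
    by move: hcz; rewrite zx /c1 cov_delE // xe andbF (negbTE nx2) eqxx.
  have xx' : x != x' by rewrite eq_sym.
  exists N1, (N2 :|: [set e]), z; split => //.
  + split => //; rewrite eE; apply: mtc_add2 => //.
      have [_ ->] := hv x; rewrite (negbTE xx') eq_sym (negbTE zx) /=; exact: nx2.
    have [_ ->] := hv x'; rewrite eqxx /= cov_delE // eE !inE eqxx orbT andbF //.
  + have he : (e \in N1) + (e \in N2) = 0.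
      by rewrite hm !inE eqxx /= (negbTE eM2).
    move=> E; rewrite !inE; case: (eqVneq E e) => [->|Ee] /=.
      by move: he; case: (e \in N1); case: (e \in N2) => //; rewrite eM (negbTE eM2).
    by rewrite orbF hm !inE Ee.
  + by move: hcz; rewrite /c1 cov_delE // eE !inE (negbTE zx) (negbTE hz) andbT.
  + move=> v; rewrite cov_add; have [-> ->] := hv v; rewrite cov_delE // eE !inE.
    case: (eqVneq v x) => [->|vx]; first by rewrite (negbTE xx') eq_sym (negbTE zx) /= (negbTE nx2) c1x.
    case: (eqVneq v x') => [->|vx'] /=; first by rewrite eq_sym (negbTE hz) /= cx' c1x' andbF.
    by case: (eqVneq v z) => _ /=; rewrite ?andbT ?orbF.
-
  exists (M1 :\ e), (M2 :|: [set e]), x'; split.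
  + split; first exact: mtc_del.
    rewrite eE; apply: mtc_add2 => //; first by rewrite eq_sym.
    by rewrite cx'.
  + move=> E; rewrite !inE; case: (eqVneq E e) => [->|Ee] /=; first by rewrite eM (negbTE eM2).
    by rewrite orbF.
  + exact: x'x.
  + by rewrite /c1 c1x' cx'.
  + move=> v; rewrite cov_add cov_delE // eE !inE.
    case: (eqVneq v x) => [->|vx] /=; first by rewrite (negbTE nx2) c1x.
    case: (eqVneq v x') => [->|vx'] /=; first by rewrite cx' c1x' andbF.
    by rewrite andbT orbF.
Qed.

Lemma flip_n (T : finType) n : forall (M1 M2 : {set {set T}}) x, #|M1| + #|M2| < n ->
  mtc M1 -> mtc M2 -> c1 M1 M2 x -> FlipP M1 M2 x.
Proof.
elim: n => [//|n IHn] M1 M2 x lt h1 h2 hc.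
have IH : forall (A B : {set {set T}}) (y : T), #|A| + #|B| < #|M1| + #|M2| ->
    mtc A -> mtc B -> c1 A B y -> FlipP A B y.
  by move=> A B y l; apply: IHn; apply: leq_trans l _.
move: hc; rewrite /c1; case c1x: (covered M1 x) => /= hc.
  by apply: flip_step => //; rewrite hc.
apply: flip_sym; apply: flip_step.
- by move=> A B y l; apply: IH; rewrite [#|M1| + _]addnC.
- exact: h2.
- exact: h1.
- by move: hc; case: (covered M2 x).
- by rewrite c1x.
Qed.

Lemma flip (T : finType) (M1 M2 : {set {set T}}) x :
  mtc M1 -> mtc M2 -> c1 M1 M2 x -> FlipP M1 M2 x.
Proof. exact: (@flip_n T (#|M1| + #|M2|).+1). Qed.


Definition sw (T : eqType) (x y v : T) := if v == x then y else if v == y then x else v.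

Lemma sw_inv (T : eqType) (x y : T) : cancel (sw x y) (sw x y).
Proof.
move=> v; rewrite /sw.
case: (eqVneq v x) => [->|vx].
  by case: (eqVneq y x) => [->|yx]; rewrite ?eqxx.
case: (eqVneq v y) => [->|vy]; first by rewrite eqxx.
by rewrite (negbTE vx) (negbTE vy).
Qed.

Lemma util_sw (T : finType) m (owner : T -> 'I_m) i (N N' : {set {set T}}) x y :
  owner x = owner y -> (forall v, covered N v = covered N' (sw x y v)) ->
  util owner i N = util owner i N'.
Proof.
move=> oxy hc; rewrite /util -(card_preimset _ (can_inj (@sw_inv T x y))).
apply: eq_card => v; rewrite !inE hc; congr (_ && _); last by rewrite sw_inv.
rewrite /sw; case: (eqVneq v x) => [->|vx]; first by rewrite oxy.
by case: (eqVneq v y) => [->|vy]; rewrite ?oxy ?eqxx // (negbTE vy).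
Qed.

Definition S1 (T : finType) (M1 M2 : {set {set T}}) := [set v | c1 M1 M2 v].

Lemma swapin (T : finType) (N : {set {set T}}) (x y x' : T) :
  mtc N -> [set y; x'] \in N -> x != x' -> x != y -> y != x' -> ~~ covered N x ->
  mtc (N :\ [set y; x'] :|: [set [set x; x']]) /\
  forall v, covered (N :\ [set y; x'] :|: [set [set x; x']]) v = covered N (sw x y v).
Proof.
move=> hN fN xx' xy yx' cx.
have cvy : covered N y by apply/coveredP; exists [set y; x']; rewrite // !inE eqxx.
have cvx' : covered N x' by apply/coveredP; exists [set y; x']; rewrite // !inE eqxx orbT.
split.
  apply: mtc_add2 => //; first exact: mtc_del.
    by rewrite cov_delE // (negbTE cx).
  by rewrite cov_delE // !inE eqxx orbT andbF.
move=> v; rewrite cov_add cov_delE // !inE /sw.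
case: (eqVneq v x) => [->|vx]; first by rewrite orbT cvy.
case: (eqVneq v y) => [->|vy] /=; first by rewrite (negbTE yx') andbF (negbTE cx).
case: (eqVneq v x') => [->|vx'] /=; first by rewrite orbT cvx'.
by rewrite andbT orbF.
Qed.

Lemma r1 (T : finType) m (owner : T -> 'I_m) (M1 M2 : {set {set T}}) (x y : T) :
  mtc M1 -> mtc M2 -> owner x = owner y -> covered M1 x -> ~~ covered M2 x ->
  covered M2 y -> ~~ covered M1 y ->
  exists M1', [/\ mtc M1', #|S1 M1' M2| < #|S1 M1 M2| &
   forall N1' N2', mtc N1' -> mtc N2' -> ms N1' N2' M1' M2 ->
     exists N1 N2, [/\ mtc N1, mtc N2, ms N1 N2 M1 M2 &
       forall i, util owner i N1 = util owner i N1' /\ util owner i N2 = util owner i N2']].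
Proof.
move=> h1 h2 oxy c1x n2x c2y n1y.
have [e0 e0M xe0] := coveredP _ _ c1x.
have [x' [x'x e0E]] := other_end h1 e0M xe0.
have xx' : x != x' by rewrite eq_sym.
have xy : x != y by apply/eqP => exy; by rewrite -exy c1x in n1y.
have yx' : y != x'.
  apply/eqP => yx; move/negP: n1y; apply; apply/coveredP; exists e0 => //.
  by rewrite e0E !inE yx eqxx orbT.
have e0M2 : e0 \notin M2 by apply/negP => h; move/negP: n2x; apply; apply/coveredP; exists e0.
set f0 := [set y; x'].
have f0M1 : f0 \notin M1.
  by apply/negP => h; move/negP: n1y; apply; apply/coveredP; exists f0; rewrite // !inE eqxx.
have ef : e0 != f0.
  by apply/negP => /eqP ef; move: xe0; rewrite ef !inE (negbTE xy) (negbTE xx').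
set M1' := M1 :\ e0 :|: [set f0].
have hM1' : mtc M1'.
  apply: mtc_add2 => //; first exact: mtc_del.
    by rewrite cov_delE // (negbTE n1y).
  by rewrite cov_delE // e0E !inE eqxx orbT andbF.
have cM1' : forall v, covered M1' v = (covered M1 v && ~~ ((v == x) || (v == x'))) || ((v == y) || (v == x')).
  by move=> v; rewrite cov_add cov_delE // e0E !inE.
exists M1'; split => //.
  have sub : S1 M1' M2 \subset S1 M1 M2 :\ x.
    apply/subsetP => v; rewrite !inE /c1 cM1'.
    case: (eqVneq v x) => [->|vx]; first by rewrite (negbTE xy) (negbTE xx') /= (negbTE n2x) andbF.
    case: (eqVneq v y) => [->|vy] /=; first by rewrite c2y orbT.
    have c1x' : covered M1 x' by apply/coveredP; exists e0; rewrite // e0E !inE eqxx orbT.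
    case: (eqVneq v x') => [->|vx'] /=; first by rewrite andbF orbT c1x'.
    by rewrite andbT orbF.
  apply: leq_ltn_trans (subset_leq_card sub) _.
  by rewrite (cardsD1 x (S1 M1 M2)) !inE /c1 c1x (negbTE n2x).
move=> N1' N2' hN1 hN2 hm.
have cx := ms_cov x hN1 hN2 hM1' h2 hm.
rewrite cM1' eqxx (negbTE xy) (negbTE xx') /= (negbTE n2x) in cx.
have nx1 : ~~ covered N1' x by move: cx; rewrite andbF /=; case: (covered N1' x).
have nx2 : ~~ covered N2' x by move: cx; rewrite andbF /=; case: (covered N1' x); case: (covered N2' x).
have he0 := hm e0; rewrite !inE eqxx (negbTE ef) (negbTE e0M2) /= in he0.
have hf0 := hm f0; rewrite !inE eqxx orbT /= in hf0.
have e0n1 : e0 \notin N1' by move: he0; case: (e0 \in N1').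
have e0n2 : e0 \notin N2' by move: he0; case: (e0 \in N1'); case: (e0 \in N2').
have hE : forall E, E != e0 -> E != f0 -> (E \in M1') = (E \in M1).
  by move=> E a b; rewrite /M1' !inE (negbTE a) (negbTE b) /= orbF.
case f1: (f0 \in N1').
- have [hN hc] := swapin hN1 f1 xx' xy yx' nx1.
  exists (N1' :\ f0 :|: [set e0]), N2'; split => //.
  + by rewrite e0E.
  + move=> E; rewrite [E \in _ :|: _]inE [E \in _ :\ _]inE [E \in [set _]]inE.
    case: (eqVneq E e0) => [->|Ee].
      by rewrite in_set1 eqxx orbT (negbTE e0n2) e0M (negbTE e0M2).
    case: (eqVneq E f0) => [->|Ef] /=.
      have fe : f0 != e0 by rewrite eq_sym.
      by move: hf0; rewrite f1 (negbTE f0M1) in_set1 (negbTE fe) => /eqP; rewrite eqn_add2l => /eqP ->.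
    by rewrite in_set1 (negbTE Ee) orbF -(hE E Ee Ef) hm.
  + by move=> i; split => //; apply: (util_sw _ oxy); rewrite e0E.
- have f2 : f0 \in N2' by move: hf0; rewrite f1; case: (f0 \in N2').
  have [hN hc] := swapin hN2 f2 xx' xy yx' nx2.
  exists N1', (N2' :\ f0 :|: [set e0]); split => //.
  + by rewrite e0E.
  + move=> E; rewrite [E \in _ :|: _]inE [E \in _ :\ _]inE [E \in [set _]]inE.
    case: (eqVneq E e0) => [->|Ee].
      by rewrite in_set1 eqxx orbT (negbTE e0n1) e0M (negbTE e0M2).
    case: (eqVneq E f0) => [->|Ef] /=.
      have fe : f0 != e0 by rewrite eq_sym.
      by move: hf0; rewrite f1 f2 (negbTE f0M1) in_set1 (negbTE fe); case: (f0 \in M2).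
    by rewrite in_set1 (negbTE Ee) orbF -(hE E Ee Ef) hm.
  + by move=> i; split => //; apply: (util_sw _ oxy); rewrite e0E.
Qed.


Definition Si (T : finType) m (owner : T -> 'I_m) i (M1 M2 : {set {set T}}) :=
  [set v | (owner v == i) && c1 M1 M2 v].

Lemma bal (T : finType) m (owner : T -> 'I_m) i (N1 N2 M1 M2 : {set {set T}}) :
  mtc N1 -> mtc N2 -> mtc M1 -> mtc M2 -> ms N1 N2 M1 M2 ->
  util owner i N1 <= util owner i N2 + #|Si owner i M1 M2|.
Proof.
move=> h1 h2 h3 h4 hm; rewrite /util.
apply: leq_trans (leq_card_setU _ _).
apply: subset_leq_card; apply/subsetP => v; rewrite !inE => /andP[ov cv].
rewrite ov /=; case c2: (covered N2 v) => //=.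
have := ms_cov v h1 h2 h3 h4 hm; rewrite cv c2 /c1.
by case: (covered M1 v); case: (covered M2 v).
Qed.

Lemma ms_trans (T : finType) (N1 N2 A1 A2 M1 M2 : {set {set T}}) :
  ms N1 N2 A1 A2 -> ms A1 A2 M1 M2 -> ms N1 N2 M1 M2.
Proof. by move=> a b E; rewrite a b. Qed.

Lemma r1' (T : finType) m (owner : T -> 'I_m) (M1 M2 : {set {set T}}) (u v : T) :
  mtc M1 -> mtc M2 -> owner u = owner v -> c1 M1 M2 u -> c1 M1 M2 v ->
  covered M1 u != covered M1 v ->
  exists M1', [/\ mtc M1', #|S1 M1' M2| < #|S1 M1 M2| &
   forall N1' N2', mtc N1' -> mtc N2' -> ms N1' N2' M1' M2 ->
     exists N1 N2, [/\ mtc N1, mtc N2, ms N1 N2 M1 M2 &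
       forall i, util owner i N1 = util owner i N1' /\ util owner i N2 = util owner i N2']].
Proof.
rewrite /c1 => h1 h2 o cu cv.
case c1u: (covered M1 u) => /=; case c1v: (covered M1 v) => //= _.
  move: cu cv; rewrite c1u c1v => cu cv.
  apply: (@r1 T m owner M1 M2 u v) => //; last by rewrite c1v.
  by move: cv; case: (covered M2 v).
move: cu cv; rewrite c1u c1v => cu cv.
apply: (@r1 T m owner M1 M2 v u) => //; last by rewrite c1u.
by move: cu; case: (covered M2 u).
Qed.

Lemma c1_flip (T : finType) (M1 M2 N1 N2 : {set {set T}}) x z :
  (forall v, covered N1 v = (if (v == x) || (v == z) then covered M2 v else covered M1 v) /\
             covered N2 v = (if (v == x) || (v == z) then covered M1 v else covered M2 v)) ->
  forall v, c1 N1 N2 v = c1 M1 M2 v.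
Proof.
move=> hv v; rewrite /c1; have [-> ->] := hv v.
by case: ifP => // _; rewrite eq_sym.
Qed.

Lemma prep (T : finType) m (owner : T -> 'I_m) (M1 M2 : {set {set T}}) (x y w : T) :
  mtc M1 -> mtc M2 -> x != y -> x != w -> y != w -> owner x = owner w -> owner y = owner w ->
  c1 M1 M2 x -> c1 M1 M2 y -> c1 M1 M2 w ->
  exists A1 A2 u v, [/\ mtc A1 /\ mtc A2, ms A1 A2 M1 M2, #|S1 A1 A2| = #|S1 M1 M2|,
     owner u = owner v & [/\ c1 A1 A2 u, c1 A1 A2 v & covered A1 u != covered A1 v]].
Proof.
move=> h1 h2 xy xw yw ox oy cx cy cw.
case: (eqVneq (covered M1 x) (covered M1 w)) => hxw; last first.
  by exists M1, M2, x, w; split.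
case: (eqVneq (covered M1 y) (covered M1 w)) => hyw; last first.
  by exists M1, M2, y, w; split.
have [N1 [N2 [z [[hN1 hN2] hm hz hcz hv]]]] := flip h1 h2 cw.
have hc := c1_flip hv.
have hS : #|S1 N1 N2| = #|S1 M1 M2| by apply: eq_card => v; rewrite !inE hc.
have fw : covered N1 w != covered N1 w = false by rewrite eqxx.
have nw : covered N1 w = covered M2 w by have [-> _] := hv w; rewrite eqxx.
case: (eqVneq z x) => zx.
  exists N1, N2, y, w; split => //; split; rewrite ?hc //.
  have yx : y != x by rewrite eq_sym.
  have [-> _] := hv y; rewrite (negbTE yw) /= zx (negbTE yx) nw hyw.
  by move: cw; rewrite /c1 eq_sym.
exists N1, N2, x, w; split => //; split; rewrite ?hc //.
have xz : x != z by rewrite eq_sym.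
have [-> _] := hv x; rewrite (negbTE xw) /= (negbTE xz) nw hxw.
by move: cw; rewrite /c1 eq_sym.
Qed.

Lemma util_sum (T : finType) m (owner : T -> 'I_m) i (N : {set {set T}}) :
  util owner i N = \sum_(v | owner v == i) (covered N v : nat).
Proof.
rewrite /util -sum1_card.
rewrite (eq_bigl (fun v => (owner v == i) && covered N v)); last by move=> v; rewrite inE.
by rewrite big_mkcondr /=; apply: eq_bigr => v _; case: (covered N v).
Qed.

Definition Bal (T : finType) m (owner : T -> 'I_m) (N1 N2 : {set {set T}}) :=
  forall i, util owner i N1 <= util owner i N2 + 2 /\ util owner i N2 <= util owner i N1 + 2.

Lemma main_n (T : finType) m (owner : T -> 'I_m) n : forall (M1 M2 : {set {set T}}),
  #|S1 M1 M2| < n -> mtc M1 -> mtc M2 ->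
  exists N1 N2, [/\ mtc N1, mtc N2, ms N1 N2 M1 M2 & Bal owner N1 N2].
Proof.
elim: n => [//|n IHn] M1 M2 lt h1 h2.
case: (boolP [exists i, 2 < #|Si owner i M1 M2|]).
- move/existsP=> [i hi].
  have [x xS] : exists x, x \in Si owner i M1 M2.
    by apply/card_gt0P; apply: leq_trans hi.
  have hi1 : 1 < #|Si owner i M1 M2 :\ x|.
    by move: hi; rewrite (cardsD1 x) xS.
  have [y yS] : exists y, y \in Si owner i M1 M2 :\ x.
    by apply/card_gt0P; apply: leq_trans hi1.
  have hi2 : 0 < #|Si owner i M1 M2 :\ x :\ y|.
    by move: hi1; rewrite (cardsD1 y) yS.
  have [w wS] := card_gt0P hi2.
  move: xS yS wS; rewrite !inE => /andP[ox cx] /and3P[yx oy cy] /and4P[wy wx ow cw].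
  have xy : x != y by rewrite eq_sym.
  have xw : x != w by rewrite eq_sym.
  have yw : y != w by rewrite eq_sym.
  have [A1 [A2 [u [v [[hA1 hA2] hmA hSA ouv [cu cv huv]]]]]] :=
    @prep T m owner M1 M2 x y w h1 h2 xy xw yw
      (etrans (eqP ox) (esym (eqP ow))) (etrans (eqP oy) (esym (eqP ow))) cx cy cw.
  have [M1' [hM1' ltM back]] := r1' hA1 hA2 ouv cu cv huv.
  have lt' : #|S1 M1' A2| < n by apply: leq_trans ltM _; rewrite hSA.
  have [N1' [N2' [hN1' hN2' hm' hb]]] := IHn _ _ lt' hM1' hA2.
  have [N1 [N2 [hN1 hN2 hm hu]]] := back _ _ hN1' hN2' hm'.
  exists N1, N2; split => //; first exact: ms_trans hm hmA.
  by move=> j; have [-> ->] := hu j; apply: hb.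
- move/existsPn => hn.
  exists M1, M2; split => // j.
  have h3 : forall j, #|Si owner j M1 M2| <= 2 by move=> k; rewrite leqNgt hn.
  have e : Si owner j M2 M1 = Si owner j M1 M2.
    by apply/setP => v; rewrite !inE /c1 [covered M2 v == _]eq_sym.
  split.
    apply: leq_trans (bal owner j h1 h2 h1 h2 (fun E => erefl)) _; rewrite leq_add2l; exact: h3.
  apply: leq_trans (bal owner j h2 h1 h2 h1 (fun E => erefl)) _; rewrite leq_add2l e; exact: h3.
Qed.

Theorem lemma1 (T : finType) (adj : rel T) (m : nat) (owner : T -> 'I_m)
  (M1 M2 : {set {set T}}) :
  is_matching adj M1 -> is_matching adj M2 ->
  exists N1 N2 : {set {set T}},
    is_matching adj N1 /\ is_matching adj N2 /\
    forall i : 'I_m,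
      (util owner i N1 <= util owner i N2 + 2 /\ util owner i N2 <= util owner i N1 + 2) /\
      util owner i N1 + util owner i N2 = util owner i M1 + util owner i M2.
Proof.
move=> hM1 hM2.
have mt : forall M, is_matching adj M -> mtc M.
  move=> M [he hd]; split => // E /he [x [y [xy [_ ->]]]]; by exists x, y.
have h1 := mt _ hM1; have h2 := mt _ hM2.
have [N1 [N2 [hN1 hN2 hm hb]]] := @main_n T m owner (#|S1 M1 M2|).+1 M1 M2 (ltnSn _) h1 h2.
have sub : forall E, (E \in N1) || (E \in N2) -> is_edge adj E.
  move=> E hE; have := hm E.
  case e1: (E \in M1); first by move=> _; apply: hM1.1.
  case e2: (E \in M2); first by move=> _; apply: hM2.1.
  by move: hE; case: (E \in N1); case: (E \in N2).
exists N1, N2; split; last split.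
- split; last exact: hN1.2.
  by move=> E hE; apply: sub; rewrite hE.
- split; last exact: hN2.2.
  by move=> E hE; apply: sub; rewrite hE orbT.
- move=> i; split; first exact: hb.
  rewrite !util_sum -!big_split /=; apply: eq_bigr => v _.
  exact: ms_cov.
Qed.
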